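(* Let $T$ be a left-linear term rewriting system and $\psi$ a convergent multistep for $T$. Then there exist $\chi$ and $\phi$ such that $\psi\approx_E\chi\cdot\phi$, $\chi$ is a finite stepwise-or-normal proof term all of whose components $\chi[i]$ ($i<|\chi|$) have depth $0$, and $\phi$ is a convergent multistep with $mind(\phi)>0$.
   Context: Setting. $T=(\Sigma,R)$: $\Sigma$ finite; rules $\mu: l\to r$ with $l$ finite, non-variable and linear, variables of $r$ among those of $l$, $r$ possibly infinite. Terms are finite or infinite trees. Multisteps. $\Sigma^R$ is $\Sigma$ plus a symbol $\mu$ of arity $n$ for each rule $\mu: l[x_1,..,x_n]\to r[x_1,..,x_n]$. A multistep is a closed finite or infinite term over $\Sigma^R$; $src(\psi)$ is its normal form under $\mu(x_1,..,x_n)\to l[x_1,..,x_n]$; $tgt(\psi)$ is its normal form, if it exists (via a strongly convergent reduction), under $\mu(x_1,..,x_n)\to r[x_1,..,x_n]$; convergent iff $tgt(\psi)$ is defined; $mind(\psi)=\omega$ if there is no rule symbol, else the least depth of a rule-symbol occurrence. Proof terms are terms over $\Sigma^R\cup\{\cdot/2\}$ built from multisteps by: $\psi_1\cdot\psi_2$ ($\psi_1$ convergent, $tgt(\psi_1)=src(\psi_2)$); infinite concatenation $\prod_{i<\omega}\psi_i=\psi_0\cdot(\psi_1\cdot\cdots)$ (all $\psi_i$ convergent, $tgt(\psi_i)=src(\psi_{i+1})$); $f(\psi_1,..,\psi_m)$, $f\in\Sigma$; $\mu(\psi_1,..,\psi_n)$; with $src$ of concatenations from the first factor, $tgt(\psi_1\cdot\psi_2)=tgt(\psi_2)$,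 $tgt(\prod\psi_i)=\lim tgt(\psi_i)$, componentwise for $f$, and $l[src(\psi_i)]$, $r[tgt(\psi_i)]$ for $\mu$; $mind$ is the minimum for concatenations, $1+\min$ for $f$, $0$ for $\mu$. Base permutation equivalence $\approx_E$: derivable in the equational logic whose axioms are the closed instances (both sides proof terms) of $src(\psi)\cdot\psi=\psi$; $\psi\cdot tgt(\psi)=\psi$ ($\psi$ convergent); associativity of $\cdot$; $f(\vec\psi)\cdot f(\vec\phi)=f(\psi_1\cdot\phi_1,..)$; $\prod_i f(\psi^1_i,..,\psi^m_i)=f(\prod_i\psi^1_i,..)$; $\mu(\vec\psi)=\mu(src(\psi_1),..)\cdot r[\vec\psi]$; $\mu(\vec\psi)=l[\vec\psi]\cdot\mu(tgt(\psi_1),..)$ (all $\psi_i$ convergent); and whose rules are reflexivity, symmetry, transitivity and congruence for all symbols and for binary and infinite concatenation. Stepwise terms. A one-step is a multistep with exactly one rule-symbol occurrence, its depth being the length of that occurrence's position. Stepwise proof terms are one-steps and binary/infinite concatenations of stepwise ones; stepwise-or-normal ones also include rule-free terms. $|\chi|$: $0$ for rule-free, $1$ for one-steps, additive for binary concatenation; finite means $|\chi|<\omega$. Components: $\chi[0]=\chi$ for a one-step; $(\chi_1\cdot\chi_2)[i]=\chi_1[i]$ if $i<|\chi_1|$, else $\chi_2[i-|\chi_1|]$. *)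

(* Defs.v *)
From mathcomp Require Import all_boot.

Set Implicit Arguments.
Unset Strict Implicit.
Unset Printing Implicit Defensive.

(* Labels of (possibly infinite) trees: function symbols of Sigma, rule
   symbols of R, the binary concatenation symbol, and variables x_i. *)
Inductive lab (F R : Type) := LF of F | LR of R | LDot | LVar of nat.
Arguments LDot {F R}.
Arguments LF {F R} _.
Arguments LR {F R} _.
Arguments LVar {F R} _.

(* A (finite or infinite) tree is its labelling of positions; a position is
   the list of child indices from the root (top-down).  Unused positions are
   mapped to None. *)
Definition tree (F R : Type) := seq nat -> option (lab F R).

(* A TRS: finite signature Sigma, set of rules R; rule mu has arity n (the
   number of variables of its lhs, named x_0 .. x_{n-1}), lhs and rhs. *)
Record trs := TRS {
  fs : finType;
  fs_ar : fs -> nat;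
  rs : Type;
  rs_ar : rs -> nat;
  lhs : rs -> tree fs rs;
  rhs : rs -> tree fs rs }.

Section Defs.
Variable T : trs.
Notation ptree := (tree (fs T) (rs T)).
Notation plab := (lab (fs T) (rs T)).

Definition arity (a : plab) : nat :=
  match a with
  | LF f => fs_ar f
  | LR mu => rs_ar mu
  | LDot => 2
  | LVar _ => 0
  end.

Definition wf (t : ptree) : Prop :=
  t [::] <> None /\
  forall p i, (exists a, t (rcons p i) = Some a) <->
              (exists a, t p = Some a /\ i < arity a).

Definition node (a : plab) (args : nat -> ptree) : ptree :=
  fun p => match p with
           | [::] => Some a
           | i :: q => if i < arity a then args i q else None
           end.

Definition mkDot (a b : ptree) : ptree :=
  node LDot (fun i => if i == 0 then a else b).

(* infinite concatenation  prod_i psi_i = psi_0 . (psi_1 . ( ... )) *)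
Fixpoint infcat_from (psi : nat -> ptree) (k : nat) (p : seq nat) : option plab :=
  match p with
  | [::] => Some LDot
  | 0 :: q => psi k q
  | 1 :: q => infcat_from psi k.+1 q
  | _ => None
  end.
Definition infcat (psi : nat -> ptree) : ptree := infcat_from psi 0.

Definition subtree (t : ptree) (p : seq nat) : ptree := fun q => t (p ++ q).

Definition repl (s : ptree) (p : seq nat) (u : ptree) : ptree :=
  fun q => if take (size p) q == p then u (drop (size p) q) else s q.

Fixpoint subst (t : ptree) (sigma : nat -> ptree) (p : seq nat) {struct p}
  : option plab :=
  match t [::] with
  | Some (LVar i) => sigma i p
  | _ => match p with
         | [::] => t [::]
         | j :: q => subst (fun q' => t (j :: q')) sigma q
         end
  end.

Definition sigma_var_tree (t : ptree) : Prop :=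
  forall p, t p <> Some LDot /\ forall mu, t p <> Some (LR mu).

Definition left_linear_trs : Prop :=
  forall mu : rs T,
    wf (lhs mu) /\ wf (rhs mu) /\ sigma_var_tree (lhs mu) /\ sigma_var_tree (rhs mu) /\
     (exists d, forall p, d < size p -> lhs mu p = None) /\
     (exists f, lhs mu [::] = Some (LF f)) /\
     (forall i, i < rs_ar mu ->
        exists p, lhs mu p = Some (LVar i) /\
                  forall q, lhs mu q = Some (LVar i) -> q = p) /\
     (forall p i, lhs mu p = Some (LVar i) -> i < rs_ar mu) /\
     (forall p i, rhs mu p = Some (LVar i) -> i < rs_ar mu).

Definition multistep (t : ptree) : Prop :=
  wf t /\ forall p, t p <> Some LDot /\ forall i, t p <> Some (LVar i).

Definition rule_free (t : ptree) : Prop := forall p mu, t p <> Some (LR mu).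

Definition tlim (u : nat -> ptree) (t : ptree) : Prop :=
  forall d, exists N, forall k, N <= k ->
    forall q, size q <= d -> u k q = t q.

(* one rewrite step, at position p, in the auxiliary system
   mu(x_0,..,x_{n-1}) -> rr mu [x_0,..,x_{n-1}] on Sigma^R-terms *)
Definition step_at (rr : rs T -> ptree) (s : ptree) (p : seq nat) (t : ptree) : Prop :=
  exists mu, s p = Some (LR mu) /\
    t = repl s p (subst (rr mu) (fun i => subtree s (rcons p i))).

Definition sc_red (rr : rs T -> ptree) (s t : ptree) : Prop :=
  (exists n (u : nat -> ptree), [/\ u 0 = s, u n = t &
      forall k, k < n -> exists p, step_at rr (u k) p (u k.+1)])
  \/
  (exists (u : nat -> ptree) (ps : nat -> seq nat),
      [/\ u 0 = s,
          forall k, step_at rr (u k) (ps k) (u k.+1),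
          (forall d, exists N, forall k, N <= k -> d <= size (ps k)) &
          tlim u t]).

Definition is_src (psi s : ptree) : Prop := sc_red (@lhs T) psi s /\ rule_free s.
Definition is_tgt (psi t : ptree) : Prop := sc_red (@rhs T) psi t /\ rule_free t.
Definition convergent_ms (psi : ptree) : Prop := exists t, is_tgt psi t.

Definition mind_ge (psi : ptree) (d : nat) : Prop :=
  forall p mu, psi p = Some (LR mu) -> d <= size p.

(* proof terms: PT t s Tg  means t is a proof term with source s and set of
   targets Tg (empty iff t is not convergent). *)
Inductive PT : ptree -> ptree -> (ptree -> Prop) -> Prop :=
| PT_ms psi s : multistep psi -> is_src psi s -> PT psi s (is_tgt psi)
| PT_dot a b s1 T1 s2 T2 :
    PT a s1 T1 -> PT b s2 T2 -> T1 s2 -> PT (mkDot a b) s1 T2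
| PT_inf (psi s : nat -> ptree) (Tg : nat -> ptree -> Prop) :
    (forall i, PT (psi i) (s i) (Tg i)) ->
    (forall i, Tg i (s i.+1)) ->
    PT (infcat psi) (s 0) (tlim (fun i => s i.+1))
| PT_F f (psi s : nat -> ptree) (Tg : nat -> ptree -> Prop) :
    (forall j, j < fs_ar f -> PT (psi j) (s j) (Tg j)) ->
    PT (node (LF f) psi) (node (LF f) s)
       (fun t => exists ts, (forall j, j < fs_ar f -> Tg j (ts j)) /\
                            t = node (LF f) ts)
| PT_R mu (psi s : nat -> ptree) (Tg : nat -> ptree -> Prop) :
    (forall j, j < rs_ar mu -> PT (psi j) (s j) (Tg j)) ->
    PT (node (LR mu) psi) (subst (lhs mu) s)
       (fun t => exists ts, (forall j, j < rs_ar mu -> Tg j (ts j)) /\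
                            t = subst (rhs mu) ts).

Definition is_pt (t : ptree) : Prop := exists s Tg, PT t s Tg.

Inductive peq : ptree -> ptree -> Prop :=
| pe_refl t : is_pt t -> peq t t
| pe_sym a b : peq a b -> peq b a
| pe_trans a b c : peq a b -> peq b c -> peq a c
| pe_cong_node (x : plab) (a b : nat -> ptree) :
    (forall j, j < arity x -> peq (a j) (b j)) ->
    is_pt (node x a) -> is_pt (node x b) -> peq (node x a) (node x b)
| pe_cong_inf (a b : nat -> ptree) :
    (forall i, peq (a i) (b i)) ->
    is_pt (infcat a) -> is_pt (infcat b) -> peq (infcat a) (infcat b)
| pe_src psi s Tg : PT psi s Tg -> is_pt (mkDot s psi) -> peq (mkDot s psi) psi
| pe_tgt psi s Tg t : PT psi s Tg -> Tg t -> is_pt (mkDot psi t) ->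
    peq (mkDot psi t) psi
| pe_assoc a b c : is_pt (mkDot (mkDot a b) c) -> is_pt (mkDot a (mkDot b c)) ->
    peq (mkDot (mkDot a b) c) (mkDot a (mkDot b c))
| pe_F_dot f (a b : nat -> ptree) :
    is_pt (mkDot (node (LF f) a) (node (LF f) b)) ->
    is_pt (node (LF f) (fun j => mkDot (a j) (b j))) ->
    peq (mkDot (node (LF f) a) (node (LF f) b)) (node (LF f) (fun j => mkDot (a j) (b j)))
| pe_F_inf f (a : nat -> nat -> ptree) :
    is_pt (infcat (fun i => node (LF f) (a i))) ->
    is_pt (node (LF f) (fun j => infcat (fun i => a i j))) ->
    peq (infcat (fun i => node (LF f) (a i))) (node (LF f) (fun j => infcat (fun i => a i j)))
| pe_R_out mu (psi s : nat -> ptree) (Tg : nat -> ptree -> Prop) :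
    (forall j, j < rs_ar mu -> PT (psi j) (s j) (Tg j)) ->
    is_pt (node (LR mu) psi) ->
    is_pt (mkDot (node (LR mu) s) (subst (rhs mu) psi)) ->
    peq (node (LR mu) psi) (mkDot (node (LR mu) s) (subst (rhs mu) psi))
| pe_R_in mu (psi s : nat -> ptree) (Tg : nat -> ptree -> Prop) (t : nat -> ptree) :
    (forall j, j < rs_ar mu -> PT (psi j) (s j) (Tg j)) ->
    (forall j, j < rs_ar mu -> Tg j (t j)) ->
    is_pt (node (LR mu) psi) ->
    is_pt (mkDot (subst (lhs mu) psi) (node (LR mu) t)) ->
    peq (node (LR mu) psi) (mkDot (subst (lhs mu) psi) (node (LR mu) t)).

Definition one_step (t : ptree) : Prop :=
  multistep t /\ exists p mu, t p = Some (LR mu) /\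
    forall q nu, t q = Some (LR nu) -> q = p.

Definition os_depth (t : ptree) (d : nat) : Prop :=
  one_step t /\ exists p mu, t p = Some (LR mu) /\ size p = d.

Inductive fsw : ptree -> nat -> Prop :=
| fsw_nf t : multistep t -> rule_free t -> fsw t 0
| fsw_one t : one_step t -> fsw t 1
| fsw_dot a b n m : fsw a n -> fsw b m -> fsw (mkDot a b) (n + m).

Inductive component : ptree -> nat -> ptree -> Prop :=
| comp_one t : one_step t -> component t 0 t
| comp_l a b n i c : fsw a n -> i < n -> component a i c ->
    component (mkDot a b) i c
| comp_r a b n i c : fsw a n -> n <= i -> component b (i - n) c ->
    component (mkDot a b) i c.

End Defs.

(* Main.v *)
Require Import Defs.
From mathcomp Require Import all_boot zify.
From Stdlib Require Import Classical FunctionalExtensionality ClassicalEpsilon.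

Set Implicit Arguments.
Unset Strict Implicit.
Unset Printing Implicit Defensive.

Section Basic.
Variable T : trs.
Notation tr := (tree (fs T) (rs T)).
Notation lb := (lab (fs T) (rs T)).

Definition child (t : tr) (i : nat) : tr := fun q => t (i :: q).
Definition upd (f : nat -> tr) (i : nat) (x : tr) : nat -> tr :=
  fun k => if k == i then x else f k.

Lemma upd_upd f i x y : upd (upd f i x) i y = upd f i y.
Proof. apply: functional_extensionality => k; rewrite /upd; by case: (k == i). Qed.
Lemma upd_same f i : upd f i (f i) = f.
Proof. apply: functional_extensionality => k; rewrite /upd; by case: eqP => [->|]. Qed.

Lemma wf_prefix (t : tr) p q : wf t -> t (p ++ q) <> None -> t p <> None.
Proof.
move=> [_ Hw]; elim/last_ind: q => [|q i IH]; first by rewrite cats0.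
rewrite -rcons_cat => H; apply: IH.
have [/Hw [b [Hb _]] _] : (exists a, t (rcons (p ++ q) i) = Some a) /\ True.
  by split => //; case: (t (rcons (p ++ q) i)) H => [a|] // _; exists a.
by rewrite Hb.
Qed.

Lemma wf_child_lt (t : tr) k q : wf t -> t (k :: q) <> None ->
  exists a, t [::] = Some a /\ k < arity a.
Proof.
move=> Hw H; have := @wf_prefix t [:: k] q Hw H.
case E: (t [:: k]) => [b|] // _.
by apply/(Hw.2 [::] k); exists b.
Qed.

Lemma wf_none_child (t : tr) a i q : wf t -> t [::] = Some a -> arity a <= i ->
  t (i :: q) = None.
Proof.
move=> Hw Ha Hi; case E: (t (i :: q)) => [b|] //.
have [a' [Ha' Hlt]] := @wf_child_lt t i q Hw (ltac:(by rewrite E)).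
move: Ha'; rewrite Ha => -[Heq]; subst a'.
by move: Hi; rewrite leqNgt Hlt.
Qed.

Lemma node_ext (a : lb) (f g : nat -> tr) :
  (forall i, i < arity a -> f i = g i) -> node a f = node a g.
Proof.
move=> H; apply: functional_extensionality => [[|i q]] //=.
by case: ifP => // /H ->.
Qed.

Lemma node_child (t : tr) a : wf t -> t [::] = Some a -> t = node a (child t).
Proof.
move=> Hw Ha; apply: functional_extensionality => [[|i q]] /=; first by [].
case: ifP => // Hi; apply: wf_none_child Hw Ha _.
by rewrite leqNgt Hi.
Qed.

Lemma wf_child (t : tr) a i : wf t -> t [::] = Some a -> i < arity a -> wf (child t i).
Proof.
move=> Hw Ha Hi; split.
  rewrite /child.
  have [[b Hb] _] : (exists b, t (rcons [::] i) = Some b) /\ True.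
    by split => //; apply/(Hw.2 [::] i); exists a.
  by rewrite /= in Hb; rewrite Hb.
move=> p k; rewrite /child; exact: (Hw.2 (i :: p) k).
Qed.

Lemma wf_node (a : lb) (f : nat -> tr) :
  (forall i, i < arity a -> wf (f i)) -> wf (node a f).
Proof.
move=> H; split => // [[|j p]] i /=.
  split.
    by case: ifP => [Hi _|_ [x Hx] //]; exists a.
  move=> [b [[<-] Hi]]; rewrite Hi.
  by case: (H i Hi) => Hn _; case E: (f i [::]) Hn => [c|] // _; exists c.
case: ifP => Hj; last by split => -[x Hx] //; case: Hx.
exact: ((H j Hj).2 p i).
Qed.

Lemma subst_none (t : tr) s p : (forall q, t q = None) -> subst t s p = None.
Proof.
elim: p t => [|k p IH] t H /=; rewrite H //.
by apply: IH => q; exact: H.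
Qed.

Lemma subst_var (t : tr) s j : t [::] = Some (LVar j) -> subst t s = s j.
Proof. by move=> H; apply: functional_extensionality => [[|k q]] /=; rewrite H. Qed.

Lemma subst_F (t : tr) s f : wf t -> t [::] = Some (LF f) ->
  subst t s = node (LF f) (fun i => subst (child t i) s).
Proof.
move=> Hw H; apply: functional_extensionality => [[|i q]] /=; rewrite H //.
case: ifP => // Hi; apply: subst_none => r.
apply: (wf_none_child _ Hw H); by rewrite /= leqNgt Hi.
Qed.

Lemma subst_nonvar_cons (t : tr) s k q : (forall j, t [::] <> Some (LVar j)) ->
  subst t s (k :: q) = subst (child t k) s q.
Proof. move=> H /=; case E: (t [::]) => [[f|mu||j]|] //; by case: (H j). Qed.

Lemma subst_at_var (t : tr) s q j p : wf t -> t q = Some (LVar j) ->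
  subst t s (q ++ p) = s j p.
Proof.
elim: q t => [|k q IH] t Hw Hq /=; first by rewrite (subst_var s Hq).
have [a [Ha Hk]] := @wf_child_lt t k q Hw (ltac:(by rewrite Hq)).
rewrite Ha; have Hc := wf_child Hw Ha Hk.
have -> : match a with LVar i => s i (k :: q ++ p) | _ => subst (fun q' => t (k :: q')) s (q ++ p) end
   = subst (child t k) s (q ++ p).
  by case: a Ha Hk {Hc} => //.
exact: IH.
Qed.

Lemma subst_inv (t : tr) s p a : subst t s p = Some a ->
  (t p = Some a /\ forall j, a <> LVar j) \/
  exists q q' j, [/\ p = q ++ q', t q = Some (LVar j) & s j q' = Some a].
Proof.
elim: p t => [|k p IH] t /=.
  case E: (t [::]) => [[f|mu||j]|] H //; try (left; split => //; case: H => <- //).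
  by right; exists [::], [::], j.
case E: (t [::]) => [[f|mu||j]|] H //; try (
  case: (IH _ H) => [[H1 H2]|[q [q' [j [-> H1 H2]]]]];
    [left; split => // | right; exists (k :: q), q', j; split => //]).
by right; exists [::], (k :: p), j.
Qed.

Definition wfat (u : tr) p := forall i,
  (exists a, u (rcons p i) = Some a) <-> (exists a, u p = Some a /\ i < arity a).

Lemma subst_nil (t : tr) s : subst t s [::] =
  match t [::] with Some (LVar j) => s j [::] | o => o end.
Proof. by rewrite /=; case: (t [::]) => [[]|]. Qed.

Lemma var_dec (t : tr) : (exists j, t [::] = Some (LVar j)) \/ (forall j, t [::] <> Some (LVar j)).
Proof. case: (t [::]) => [[f|mu||j]|]; try (by right); by left; exists j. Qed.

Lemma wfat_subst (t : tr) s p : wf t ->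
  (forall q q' j, p = q ++ q' -> t q = Some (LVar j) -> s j [::] <> None /\ wfat (s j) q') ->
  (forall i j, t (rcons p i) = Some (LVar j) -> s j [::] <> None) ->
  wfat (subst t s) p.
Proof.
elim: p t => [|k p IH] t Hw H H2.
  case: (var_dec t) => [[j E]|Hnv].
    by rewrite (subst_var s E); case: (H [::] [::] j erefl E).
  case E: (t [::]) => [b|]; last by case: Hw; rewrite E.
  move=> i; change (rcons [::] i) with [:: i]; rewrite subst_nonvar_cons // subst_nil /child subst_nil E.
  have Hb : forall j, b <> LVar j by move=> j Hj; apply: (Hnv j); rewrite E Hj.
  have -> : (match b with LF s0 => Some (LF s0) | LR r => Some (LR r) | LDot => Some LDot | LVar j => s j [::] end) = Some b.
    by case: b Hb {E} => // j /(_ j).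
  have Hti := Hw.2 [::] i; rewrite /= E in Hti.
  case E2: (t [:: i]) Hti => [[g|nu||j']|] Hti; try (by rewrite -Hti).
  have Hn := H2 i j' E2.
  split => _; first by apply/Hti; eexists; eauto.
  by case E3: (s j' [::]) Hn => [c|] // _; exists c.
case: (var_dec t) => [[j E]|Hnv].
  by rewrite (subst_var s E); case: (H [::] (k :: p) j erefl E).
case E: (t [::]) => [b|]; last by case: Hw; rewrite E.
move=> i; change (rcons (k :: p) i) with (k :: rcons p i); rewrite !subst_nonvar_cons //.
case Hk: (k < arity b).
  have Hc : wf (child t k) by apply: wf_child Hw E Hk.
  apply: (IH (child t k) Hc) => [q q' j Hq Hj|i' j Hj].
    by apply: (H (k :: q) q' j); rewrite ?Hq.
  exact: (H2 i' j Hj).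
have Hn : forall r, child t k r = None.
  by move=> r; apply: (wf_none_child _ Hw E); rewrite leqNgt Hk.
by rewrite !subst_none //; split => -[x Hx] //; case: Hx.
Qed.

Lemma wf_subst (t : tr) s : wf t ->
  (forall q j, t q = Some (LVar j) -> wf (s j)) -> wf (subst t s).
Proof.
move=> Hw H; split.
  case: (var_dec t) => [[j E]|Hnv]; first by rewrite (subst_var s E); case: (H _ _ E).
  rewrite subst_nil; case E: (t [::]) => [[f|mu||j]|] //; first by case: (Hnv j).
  by case: Hw; rewrite E.
move=> p; apply: wfat_subst Hw _ _ => [q q' j _ Hj|i j Hj]; case: (H _ _ Hj) => H1 H2 //; split => //.
Qed.

End Basic.

Set Implicit Arguments.
Unset Strict Implicit.
Unset Printing Implicit Defensive.

Section Red.
Variable T : trs.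
Notation tr := (tree (fs T) (rs T)).
Notation lb := (lab (fs T) (rs T)).
Variable rr : rs T -> tr.

Inductive ared (d : nat) : tr -> tr -> Prop :=
| ar_refl s : ared d s s
| ar_step s p s1 t : d <= size p -> step_at rr s p s1 -> ared d s1 t -> ared d s t.

Lemma ared_trans d s x y : ared d s x -> ared d x y -> ared d s y.
Proof. elim=> // s0 p s1 t Hp Hs _ IH Hy; apply: ar_step Hp Hs (IH Hy). Qed.

Lemma ared_weaken d d' s t : d' <= d -> ared d s t -> ared d' s t.
Proof.
move=> Hd; elim=> [s0|s0 p s1 t0 Hp Hs _ IH]; first exact: ar_refl.
apply: ar_step _ Hs IH; exact: leq_trans Hd Hp.
Qed.

Lemma ared_one d s p t : d <= size p -> step_at rr s p t -> ared d s t.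
Proof. move=> Hp Hs; apply: ar_step Hp Hs (ar_refl _ _). Qed.

Lemma repl_nil (s : tr) u : repl s [::] u = u.
Proof. by apply: functional_extensionality => q; rewrite /repl /= take0 drop0. Qed.

Lemma repl_keep (s : tr) p u q : size q < size p -> repl s p u q = s q.
Proof.
move=> H; rewrite /repl take_oversize ?(ltnW H) //.
case: eqP => // E; by move: H; rewrite E ltnn.
Qed.

Lemma step_keep s p t q : step_at rr s p t -> size q < size p -> t q = s q.
Proof. by case=> mu [_ ->]; apply: repl_keep. Qed.

Lemma ared_keep d s t q : ared d s t -> size q < d -> t q = s q.
Proof.
elim=> // s0 p s1 t0 Hp Hs _ IH Hq.
rewrite IH // (step_keep Hs) //; exact: leq_trans Hq Hp.
Qed.

Lemma child_repl (s : tr) k p u i :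
  child (repl s (k :: p) u) i = if k == i then repl (child s i) p u else child s i.
Proof.
apply: functional_extensionality => q; rewrite /child /repl /= eqseq_cons.
by case: (eqVneq i k) => [->|Hne].
Qed.

Lemma subtree_node (a : lb) f i p j : i < arity a ->
  subtree (node a f) (rcons (i :: p) j) = subtree (f i) (rcons p j).
Proof. by move=> Hi; apply: functional_extensionality => q; rewrite /subtree /= Hi. Qed.

Lemma step_node (a : lb) (f : nat -> tr) i p x : i < arity a ->
  step_at rr (f i) p x -> step_at rr (node a f) (i :: p) (node a (upd f i x)).
Proof.
move=> Hi [mu [Hmu ->]]; exists mu; split; first by rewrite /= Hi.
have -> : (fun j => subtree (node a f) (rcons (i :: p) j)) = (fun j => subtree (f i) (rcons p j)).
  by apply: functional_extensionality => j; apply: subtree_node.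
apply: functional_extensionality => [[|k q]]; first by rewrite /repl.
rewrite /repl /= eqseq_cons /upd.
case: (eqVneq k i) => [->|Hne] /=; first by rewrite Hi.
by [].
Qed.

Lemma ared_node (a : lb) i d s x : i < arity a -> ared d s x ->
  forall f : nat -> tr, f i = s -> ared d.+1 (node a f) (node a (upd f i x)).
Proof.
move=> Hi; elim=> [s0|s0 p s1 t Hp Hs _ IH] f Hf.
  by rewrite -Hf upd_same; apply: ar_refl.
apply: (ar_step (p := i :: p) (s1 := node a (upd f i s1))) => //.
  by apply: step_node; rewrite ?Hf.
have := IH (upd f i s1); rewrite upd_upd; apply; by rewrite /upd eqxx.
Qed.

Lemma ared_node_all (a : lb) d (f g : nat -> tr) :
  (forall i, i < arity a -> ared d (f i) (g i)) -> ared d.+1 (node a f) (node a g).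
Proof.
move=> H.
pose h m := fun i => if i < m then g i else f i.
have Hm : forall m, m <= arity a -> ared d.+1 (node a f) (node a (h m)).
  elim=> [|m IH] Hm.
    have -> : h 0 = f by apply: functional_extensionality.
    exact: ar_refl.
  apply: ared_trans (IH (ltnW Hm)) _.
  have -> : h m.+1 = upd (h m) m (g m).
    apply: functional_extensionality => i; rewrite /h /upd ltnS leq_eqVlt.
    by case: (eqVneq i m) => [->|].
  apply: (ared_node (s := f m)) => //; first exact: H.
  by rewrite /h ltnn.
have := Hm _ (leqnn _); rewrite (@node_ext _ a (h (arity a)) g) //.
by move=> i Hi; rewrite /h Hi.
Qed.

Lemma subst_upd_nopref (t : tr) s j z r :
  (forall r1 r2, r = r1 ++ r2 -> t r1 <> Some (LVar j)) ->
  subst t (upd s j z) r = subst t s r.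
Proof.
elim: r t => [|k r IH] t H.
  rewrite !subst_nil; case E: (t [::]) => [[f|mu||j']|] //.
  rewrite /upd; case: eqP => // Ej; subst j'; by case: (H [::] [::] erefl).
case: (var_dec t) => [[j' E]|Hnv].
  rewrite !(subst_var _ E) /upd; case: eqP => // Ej; subst j'.
  by case: (H [::] (k :: r) erefl).
rewrite !subst_nonvar_cons //; apply: IH => r1 r2 Hr.
by apply: (H (k :: r1) r2); rewrite Hr.
Qed.

Lemma subst_upd_at (t : tr) s j q z : wf t -> t q = Some (LVar j) ->
  (forall q', t q' = Some (LVar j) -> q' = q) ->
  subst t (upd s j z) = repl (subst t s) q z.
Proof.
move=> Hw Hq Hu; apply: functional_extensionality => r.
rewrite /repl; case: eqP => [Ht|Ht].
  rewrite -{1}(cat_take_drop (size q) r) Ht (subst_at_var _ _ Hw Hq).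
  by rewrite /upd eqxx.
apply: subst_upd_nopref => r1 r2 Hr Hr1.
apply: Ht; rewrite Hr (Hu _ Hr1).
by rewrite take_size_cat.
Qed.

Lemma repl_repl (s : tr) q p u :
  repl s q (repl (subtree s q) p u) = repl s (q ++ p) u.
Proof.
apply: functional_extensionality => r; rewrite /repl size_cat.
case: (eqVneq (take (size q) r) q) => [Hq|Hq].
  have Er : r = q ++ drop (size q) r by rewrite -{1}(cat_take_drop (size q) r) Hq.
  set r' := drop (size q) r in Er; clearbody r'; subst r.
  rewrite takeD (take_size_cat _ (erefl (size q))) (drop_size_cat _ (erefl (size q))).
  rewrite addnC -drop_drop (drop_size_cat _ (erefl (size q))) eqseq_cat // eqxx /=.
  by [].
case: eqP => // E; exfalso; apply/negP: Hq; apply/negPn/eqP.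
by rewrite -(take_takel _ (leq_addr (size p) (size q))) E take_size_cat.
Qed.

Lemma subtree_subst_var (t : tr) s q j p : wf t -> t q = Some (LVar j) ->
  subtree (subst t s) (q ++ p) = subtree (s j) p.
Proof.
move=> Hw Hq; apply: functional_extensionality => r.
by rewrite /subtree -catA (subst_at_var _ _ Hw Hq).
Qed.

Lemma step_subst (t : tr) s q j p x : wf t -> t q = Some (LVar j) ->
  (forall q', t q' = Some (LVar j) -> q' = q) ->
  step_at rr (s j) p x -> step_at rr (subst t s) (q ++ p) (subst t (upd s j x)).
Proof.
move=> Hw Hq Hu [mu [Hmu ->]]; exists mu; split; first by rewrite (subst_at_var _ _ Hw Hq).
have -> : (fun i => subtree (subst t s) (rcons (q ++ p) i)) = (fun i => subtree (s j) (rcons p i)).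
  apply: functional_extensionality => i; rewrite -cats1 -catA cats1.
  by rewrite (subtree_subst_var _ _ Hw Hq).
rewrite (subst_upd_at _ _ Hw Hq Hu) -repl_repl; congr (repl _ _ (repl _ _ _)).
by apply: functional_extensionality => r; rewrite /subtree (subst_at_var _ _ Hw Hq).
Qed.

Lemma ared_subst (t : tr) q j d x y : wf t -> t q = Some (LVar j) ->
  (forall q', t q' = Some (LVar j) -> q' = q) ->
  ared d x y -> forall s, s j = x -> ared (d + size q) (subst t s) (subst t (upd s j y)).
Proof.
move=> Hw Hq Hu; elim=> [s0|s0 p s1 t0 Hp Hs _ IH] s Hs0.
  by rewrite -Hs0 upd_same; apply: ar_refl.
apply: (ar_step (p := q ++ p) (s1 := subst t (upd s j s1))).
- by rewrite size_cat addnC leq_add2l.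
- by apply: step_subst => //; rewrite Hs0.
- have := IH (upd s j s1); rewrite upd_upd; apply; by rewrite /upd eqxx.
Qed.

Lemma subst_ext_vars (t : tr) s s' :
  (forall q j, t q = Some (LVar j) -> s j = s' j) -> subst t s = subst t s'.
Proof.
move=> H; apply: functional_extensionality => p.
elim: p t H => [|k p IH] t H.
  case: (var_dec t) => [[j E]|Hnv]; first by rewrite !(subst_var _ E) (H _ _ E).
  by rewrite !subst_nil; case E: (t [::]) => [[f|mu||j]|] //; case: (Hnv j).
case: (var_dec t) => [[j E]|Hnv]; first by rewrite !(subst_var _ E) (H _ _ E).
rewrite !subst_nonvar_cons //; apply: IH => q j Hq; exact: (H (k :: q) j Hq).
Qed.

Lemma ared_subst_all (t : tr) n d (s s' : nat -> tr) : wf t ->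
  (forall q j, t q = Some (LVar j) -> j < n /\ 0 < size q) ->
  (forall j q q', t q = Some (LVar j) -> t q' = Some (LVar j) -> q = q') ->
  (forall j, j < n -> exists q, t q = Some (LVar j)) ->
  (forall j, j < n -> ared d (s j) (s' j)) -> ared d.+1 (subst t s) (subst t s').
Proof.
move=> Hw Hv Hu Hex H.
pose h m := fun j => if j < m then s' j else s j.
have Hm : forall m, m <= n -> ared d.+1 (subst t s) (subst t (h m)).
  elim=> [|m IH] Hm.
    have -> : h 0 = s by apply: functional_extensionality.
    exact: ar_refl.
  apply: ared_trans (IH (ltnW Hm)) _.
  have -> : h m.+1 = upd (h m) m (s' m).
    apply: functional_extensionality => i; rewrite /h /upd ltnS leq_eqVlt.
    by case: (eqVneq i m) => [->|].
  have [q Hq] := Hex m Hm.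
  apply: ared_weaken (ared_subst Hw Hq _ (H m Hm) _).
  - by case: (Hv _ _ Hq) => _ Hs; rewrite -addn1 leq_add2l.
  - by move=> q' Hq'; apply: (Hu m q' q).
  - by rewrite /h ltnn.
have := Hm _ (leqnn _); rewrite (@subst_ext_vars t (h n) s') //.
by move=> q j Hq; rewrite /h; case: (Hv _ _ Hq) => ->.
Qed.

End Red.

Set Implicit Arguments.
Unset Strict Implicit.
Unset Printing Implicit Defensive.

Lemma choice' (A B : Type) (P : A -> B -> Prop) :
  (forall a, exists b, P a b) -> exists f : A -> B, forall a, P a (f a).
Proof.
move=> H; exists (fun a => proj1_sig (constructive_indefinite_description _ (H a))).
move=> a; exact: (proj2_sig (constructive_indefinite_description _ (H a))).
Qed.

Lemma choice3 (A B C D : Type) (P : A -> B -> C -> D -> Prop) :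
  (forall a, exists b c d, P a b c d) ->
  exists (f : A -> B) (g : A -> C) (h : A -> D), forall a, P a (f a) (g a) (h a).
Proof.
move=> H.
have [F HF] := @choice' A (B * C * D) (fun a x => P a x.1.1 x.1.2 x.2)
  (fun a => let: ex_intro b (ex_intro c (ex_intro d Hd)) := H a in ex_intro _ (b, c, d) Hd).
by exists (fun a => (F a).1.1), (fun a => (F a).1.2), (fun a => (F a).2).
Qed.

Section LR.
Variable T : trs.
Notation tr := (tree (fs T) (rs T)).
Variable rr : rs T -> tr.

Definition LRed (s t : tr) := exists (u : nat -> tr) (dd : nat -> nat),
  [/\ u 0 = s, forall k, ared rr (dd k) (u k) (u k.+1),
      (forall D, exists N, forall k, N <= k -> D <= dd k) & tlim u t].

Definition fin_sc (s t : tr) := exists n (u : nat -> tr),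
  [/\ u 0 = s, u n = t & forall k, k < n -> exists p, step_at rr (u k) p (u k.+1)].

Lemma fin_sc_refl s : fin_sc s s.
Proof. by exists 0, (fun _ => s). Qed.

Lemma fin_sc_cons s p s1 t : step_at rr s p s1 -> fin_sc s1 t -> fin_sc s t.
Proof.
move=> Hs [n [u [H0 Hn Hk]]]; exists n.+1, (fun k => if k is k'.+1 then u k' else s).
split => // [[|k]] Hk'; first by exists p; rewrite H0.
exact: Hk.
Qed.

Lemma ared_fin_sc d s t : ared rr d s t -> fin_sc s t.
Proof. elim=> [s0|s0 p s1 t0 _ Hs _ IH]; [exact: fin_sc_refl | exact: fin_sc_cons Hs IH]. Qed.

Lemma tlim_const (u : nat -> tr) N t : (forall k, N <= k -> u k = u N) -> tlim u t -> t = u N.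
Proof.
move=> Hc Hl; apply: functional_extensionality => q.
have [N' HN'] := Hl (size q).
by rewrite -(Hc (maxn N N')) ?leq_maxl // (HN' (maxn N N')) ?leq_maxr.
Qed.

Lemma sc_LRed s t : sc_red rr s t -> LRed s t.
Proof.
case=> [[n [u [H0 Hn Hk]]]|[u [ps [H0 Hs Hd Hl]]]].
  exists (fun k => u (minn k n)), (fun k => if k < n then 0 else k); split.
  - by rewrite min0n.
  - move=> k; case: ltnP => Hkn.
      rewrite (minn_idPl Hkn); have [p Hp] := Hk k Hkn.
      exact: ared_one (leq0n _) Hp.
    by rewrite (minn_idPr (leqW Hkn)); apply: ar_refl.
  - move=> D; exists (maxn n D) => k; rewrite geq_max => /andP [H1 H2].
    by rewrite ltnNge H1.
  - move=> D; exists n => k Hkn q _; by rewrite (minn_idPr Hkn) Hn.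
exists u, (fun k => size (ps k)); split => // k.
exact: ared_one (leqnn _) (Hs k).
Qed.

Lemma LRed_cons d s x t : ared rr d s x -> LRed x t -> LRed s t.
Proof.
move=> Ha [u [dd [H0 Hs Hd Hl]]].
exists (fun k => if k is k'.+1 then u k' else s), (fun k => if k is k'.+1 then dd k' else d).
split => //.
- by case=> [|k] //; rewrite H0.
- move=> D; have [N HN] := Hd D; exists N.+1 => [[|k]] //= Hk; exact: HN.
- move=> D; have [N HN] := Hl D; exists N.+1 => [[|k]] //= Hk; exact: HN.
Qed.

Lemma LRed_refl s : LRed s s.
Proof.
exists (fun _ => s), (fun k => k); split => //; first by move=> k; apply: ar_refl.
  by move=> D; exists D.
by move=> D; exists 0.
Qed.

Lemma ared_expl d s t : ared rr d s t -> exists n (v : nat -> tr) (ps : nat -> seq nat),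
  [/\ v 0 = s, v n = t & forall i, i < n -> d <= size (ps i) /\ step_at rr (v i) (ps i) (v i.+1)].
Proof.
elim=> [s0|s0 p s1 t0 Hp Hs _ [n [v [ps [H0 Hn Hst]]]]]; first by exists 0, (fun _ => s0), (fun _ => [::]).
exists n.+1, (fun k => if k is k'.+1 then v k' else s0), (fun k => if k is k'.+1 then ps k' else p).
split => // [[|i]] Hi; [by rewrite H0 | exact: Hst].
Qed.

Lemma LRed_sc s t : LRed s t -> sc_red rr s t.
Proof.
move=> [u [dd [H0 Hs Hd Hl]]].
have [nn [vv [pp Hf]]] := choice3 (fun k => ared_expl (Hs k)).
have Hv0 : forall k, vv k 0 = u k by move=> k; case: (Hf k).
have Hvn : forall k, vv k (nn k) = u k.+1 by move=> k; case: (Hf k).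
have Hst : forall k i, i < nn k -> dd k <= size (pp k i) /\ step_at rr (vv k i) (pp k i) (vv k i.+1).
  by move=> k; case: (Hf k).
have Hkeep : forall k i q, i <= nn k -> size q < dd k -> vv k i q = u k q.
  move=> k; elim=> [|i IH] q Hi Hq; first by rewrite Hv0.
  have [H1 H2] := Hst k i Hi.
  by rewrite (step_keep H2) ?IH ?(ltnW Hi) //; exact: leq_trans Hq H1.
have Hu0 : forall k, nn k = 0 -> u k.+1 = u k by move=> k Hk; rewrite -Hvn -Hv0 Hk.
case: (classic (exists N, forall k, N <= k -> nn k = 0)) => [[N HN]|Hinf].
  have Hc : forall k, N <= k -> u k = u N.
    move=> k /subnKC <-; elim: (k - N) => [|i IH]; first by rewrite addn0.
    by rewrite addnS Hu0 ?HN ?leq_addr.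
  have Ht := tlim_const Hc Hl; left.
  rewrite -H0 Ht.
  suff : ared rr 0 (u 0) (u N).
    move=> /ared_fin_sc [n [v [A B C]]]; by exists n, v.
  elim: N {HN Hc Ht} => [|N IH]; first exact: ar_refl.
  apply: ared_trans IH _; apply: ared_weaken (Hs N) => //.
right.
have Hpos : forall N, exists k, N <= k /\ 0 < nn k.
  move=> N; apply: NNPP => Hne; apply: Hinf; exists N => k Hk.
  apply: NNPP => Hk2; apply: Hne; exists k; split => //; by rewrite lt0n; apply/eqP.
pose S := fix S k := if k is k'.+1 then S k' + nn k' else 0.
have Smono : forall a b, a <= b -> S a <= S b.
  move=> a b /subnKC <-; elim: (b - a) => [|i IH]; first by rewrite addn0.
  by rewrite addnS /=; apply: leq_trans IH (leq_addr _ _).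
have SS : forall k, S k.+1 = S k + nn k by [].
have Sunb : forall g, exists k, g < S k.+1.
  suff H : forall m, exists k, m <= S k.
    move=> g; have [k Hk] := H g.+1; case: k Hk => [|k] Hk //; by exists k.
  elim=> [|m [k Hk]]; first by exists 0.
  have [k' [Hk' Hp]] := Hpos k; exists k'.+1; rewrite SS.
  have := Smono _ _ Hk'; lia.
pose kidx g := ex_minn (P := fun k => g < S k.+1) (Sunb g).
have Hk12 : forall g, g < S (kidx g).+1 /\ S (kidx g) <= g.
  move=> g; rewrite /kidx; case: ex_minnP => k Hk Hmin; split => //.
  case: k Hk Hmin => [|k] Hk Hmin //; rewrite leqNgt; apply/negP => H.
  by have := Hmin k H; rewrite ltnn.
have Sconst : forall a b, a <= b -> S a = S b -> u a = u b.
  move=> a b /subnKC <-; elim: (b - a) => [|i IH]; first by rewrite addn0.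
  rewrite addnS SS => HS.
  have H1 := Smono a (a + i) (leq_addr _ _).
  have Hn0 : nn (a + i) = 0 by lia.
  by rewrite Hu0 // IH //; lia.
have Hkge : forall g K, S K <= g -> K <= kidx g.
  move=> g K HK; rewrite leqNgt; apply/negP => H.
  have := Smono _ _ H; have := (Hk12 g).1; lia.
have repr : forall k g, S k <= g -> g <= S k.+1 -> vv (kidx g) (g - S (kidx g)) = vv k (g - S k).
  move=> k g H1 H2; have [A B] := Hk12 g.
  case: (ltngtP k (kidx g)) => [Hlt|Hgt|<-] //.
    have := Smono _ _ Hlt; rewrite SS => H3.
    have Eg : g = S (kidx g) by move: H2; rewrite SS; lia.
    have Eg2 : g - S k = nn k by move: H2 H3; rewrite SS; lia.
    rewrite Eg2 Hvn; have -> : g - S (kidx g) = 0 by lia.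
    rewrite Hv0; apply/esym/Sconst => //; move: H2 H3; rewrite !SS; lia.
  have := Smono _ _ Hgt; lia.
exists (fun g => vv (kidx g) (g - S (kidx g))), (fun g => pp (kidx g) (g - S (kidx g))).
split.
- by rewrite (repr 0 0) // Hv0.
- move=> g; have [A B] := Hk12 g; rewrite (repr (kidx g) g.+1) //; last by move: A; rewrite SS; lia.
  have -> : g.+1 - S (kidx g) = (g - S (kidx g)).+1 by lia.
  apply: (Hst _ _ _).2; move: A; rewrite SS; lia.
- move=> D; have [K HK] := Hd D; exists (S K) => g Hg.
  have [A B] := Hk12 g.
  have Hi : g - S (kidx g) < nn (kidx g) by move: A; rewrite SS; lia.
  exact: leq_trans (HK _ (Hkge _ _ Hg)) (Hst _ _ Hi).1.
- move=> D; have [K1 HK1] := Hd D.+1; have [K2 HK2] := Hl D.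
  exists (S (maxn K1 K2)) => g Hg q Hq.
  have [A B] := Hk12 g; have Hk := Hkge _ _ Hg; move: Hk; rewrite geq_max => /andP [Hk1 Hk2].
  rewrite Hkeep; first exact: HK2.
    by move: A; rewrite SS; lia.
  exact: leq_trans (HK1 _ Hk1).
Qed.

End LR.

Set Implicit Arguments.
Unset Strict Implicit.
Unset Printing Implicit Defensive.

Lemma fin_max n (P : nat -> nat -> Prop) :
  (forall j, j < n -> exists N, forall k, N <= k -> P j k) ->
  exists N, forall j, j < n -> forall k, N <= k -> P j k.
Proof.
elim: n => [|n IH] H; first by exists 0.
have [N1 HN1] := IH (fun j Hj => H j (ltnW Hj)).
have [N2 HN2] := H n (ltnSn n).
exists (maxn N1 N2) => j; rewrite ltnS leq_eqVlt => /orP [/eqP ->|Hj] k Hk.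
  by apply: HN2; move: Hk; rewrite geq_max => /andP [].
by apply: HN1 => //; move: Hk; rewrite geq_max => /andP [].
Qed.

Lemma choice2 (A B C : Type) (P : A -> B -> C -> Prop) :
  (forall a, exists b c, P a b c) -> exists (f : A -> B) (g : A -> C), forall a, P a (f a) (g a).
Proof.
move=> H; have [f [g [_ Hh]]] := @choice3 A B C unit (fun a b c _ => P a b c)
  (fun a => let: ex_intro b (ex_intro c Hc) := H a in ex_intro _ b (ex_intro _ c (ex_intro _ tt Hc))).
by exists f, g.
Qed.

Section W.
Variable T : trs.
Notation tr := (tree (fs T) (rs T)).
Variable rr : rs T -> tr.

Definition good (n : nat) (r : tr) := wf r /\ forall p x, r p = Some x ->
  (exists f, x = LF f) \/ (exists j, x = LVar j /\ j < n).

Lemma good_child n r f i : good n r -> r [::] = Some (LF f) -> i < fs_ar f -> good n (child r i).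
Proof.
move=> [Hw Hl] Hr Hi; split; first exact: (wf_child Hw Hr).
move=> p x; rewrite /child; exact: Hl.
Qed.

Lemma good_root n r : good n r -> (exists f, r [::] = Some (LF f)) \/ (exists j, r [::] = Some (LVar j) /\ j < n).
Proof.
move=> [Hw Hl]; case E: (r [::]) => [x|]; last by case: Hw; rewrite E.
case: (Hl _ _ E) => [[f ->]|[j [-> Hj]]]; [left; by exists f | right; by exists j].
Qed.

Fixpoint mnf (dd : nat -> nat -> nat) (m k : nat) : nat :=
  if m is m'.+1 then minn (dd m' k) (mnf dd m' k) else k.

Lemma mnf_le dd m k j : j < m -> mnf dd m k <= dd j k.
Proof.
elim: m => [|m IH] //; rewrite ltnS leq_eqVlt => /orP [/eqP ->|Hj] /=.
  exact: geq_minl.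
exact: leq_trans (geq_minr _ _) (IH Hj).
Qed.

Lemma mnf_ge dd m k D : (forall j, j < m -> D <= dd j k) -> D <= k -> D <= mnf dd m k.
Proof.
elim: m => [|m IH] H Hk //=; rewrite leq_min H //; apply: IH => // j Hj; exact: H (ltnW Hj).
Qed.

Lemma LRed_subst n (r : tr) (a b : nat -> tr) : good n r ->
  (forall j, LRed rr (a j) (b j)) -> LRed rr (subst r a) (subst r b).
Proof.
move=> Hg H.
have [U [dd HU]] : exists (U : nat -> nat -> tr) (dd : nat -> nat -> nat), forall j,
  [/\ U j 0 = a j, forall k, ared rr (dd j k) (U j k) (U j k.+1),
      (forall D, exists N, forall k, N <= k -> D <= dd j k) & tlim (U j) (b j)].
  exact: (@choice2 _ _ _ (fun j (u : nat -> tr) (d : nat -> nat) => [/\ u 0 = a j, forall k, ared rr (d k) (u k) (u k.+1),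
      (forall D, exists N, forall k, N <= k -> D <= d k) & tlim u (b j)]) H).
pose DD := fix DD k := if k is k'.+1 then minn (mnf dd n k) (DD k').+1 else mnf dd n 0.
pose W := fix W k (r : tr) := match k with
  | 0 => subst r (fun j => U j 0)
  | k'.+1 => match r [::] with
             | Some (LVar j) => U j k
             | Some (LF f) => node (LF f) (fun i => W k' (child r i))
             | _ => r end end.
have W_var : forall k r j, r [::] = Some (LVar j) -> W k r = U j k.
  by move=> [|k] r0 j E; [rewrite /= (subst_var _ E) | rewrite /= E].
have W0 : forall r, W 0 r = subst r a.
  move=> r0; congr subst; apply: functional_extensionality => j; by case: (HU j).
have Hmac : forall k r, good n r -> ared rr (DD k) (W k r) (W k.+1 r).
  elim=> [|k IH] r0 Hr0.
    case: (good_root Hr0) => [[f Hf]|[j [Hj Hjn]]].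
      have -> : W 1 r0 = W 0 r0.
        rewrite /= Hf (subst_F _ Hr0.1 Hf); apply: node_ext => i Hi; by [].
      exact: ar_refl.
    rewrite !(W_var _ _ _ Hj); case: (HU j) => _ Hs _ _.
    by apply: ared_weaken (Hs 0); exact: mnf_le.
  case: (good_root Hr0) => [[f Hf]|[j [Hj Hjn]]].
    have E1 : W k.+1 r0 = node (LF f) (fun i => W k (child r0 i)) by rewrite /= Hf.
    have E2 : W k.+2 r0 = node (LF f) (fun i => W k.+1 (child r0 i)) by rewrite /= Hf.
    rewrite E1 E2; apply: (ared_weaken (d := (DD k).+1)); first exact: geq_minr.
    apply: ared_node_all => i Hi; apply: IH; exact: good_child Hr0 Hf Hi.
  rewrite !(W_var _ _ _ Hj); case: (HU j) => _ Hs _ _.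
  apply: ared_weaken (Hs k.+1) => /=; exact: leq_trans (geq_minl _ _) (mnf_le _ _ Hjn).
exists (fun k => W k r), DD; split.
- exact: W0.
- move=> k; exact: Hmac.
- move=> D.
  have [N0 HN0] := @fin_max n (fun j k => D <= dd j k) (fun j _ => let: And4 _ _ Hd _ := HU j in Hd D).
  pose N1 := maxn N0 D.
  have Hmn : forall k, N1 <= k -> D <= mnf dd n k.
    move=> k; rewrite geq_max => /andP [H1 H2]; apply: mnf_ge => // j Hj; exact: HN0.
  have Hi : forall i, minn D i <= DD (N1 + i).
    elim=> [|i IHi]; first by rewrite minn0.
    rewrite addnS /=; have := Hmn (N1 + i).+1 (leqW (leq_addr _ _)); lia.
  exists (N1 + D) => k Hk; have := Hi (k - N1); rewrite subnKC; last by lia.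
  by rewrite (minn_idPl _) //; lia.
- move=> D.
  have [NN HNN] := @fin_max n (fun j k => forall q, size q <= D -> U j k q = b j q)
      (fun j _ => let: And4 _ _ _ Hl := HU j in Hl D).
  exists (NN + D) => k Hk q Hq.
  suff : forall p r k, good n r -> size p <= D -> NN + size p <= k -> W k r p = subst r b p.
    move=> Hs; apply: Hs => //; lia.
  elim=> [|i p IHp] r0 k0 Hr0 HpD Hk0.
    case: (good_root Hr0) => [[f Hf]|[j [Hj Hjn]]].
      rewrite subst_nil Hf; case: k0 Hk0 => [|k0] _; first by rewrite /= Hf.
      by rewrite /= Hf.
    rewrite (W_var _ _ _ Hj) (subst_var _ Hj); apply: HNN => //; lia.
  case: (good_root Hr0) => [[f Hf]|[j [Hj Hjn]]].
    case: k0 Hk0 => [|k0] Hk0; first by move: Hk0 => /=; lia.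
    rewrite subst_nonvar_cons; last by move=> j; rewrite Hf.
    rewrite /= Hf.
    rewrite /node; case: ifP => Hi.
      apply: IHp; [exact: good_child Hr0 Hf Hi | by move: HpD => /= ; lia | by move: Hk0 => /=; lia].
    rewrite subst_none // => q'; apply: (wf_none_child _ Hr0.1 Hf); by rewrite /= leqNgt Hi.
  rewrite (W_var _ _ _ Hj) (subst_var _ Hj); apply: HNN => //; lia.
Qed.

End W.

Set Implicit Arguments.
Unset Strict Implicit.
Unset Printing Implicit Defensive.

Section Src.
Variable T : trs.
Notation tr := (tree (fs T) (rs T)).
Hypothesis HT : left_linear_trs T.

Lemma lab_good n (r : tr) : wf r -> sigma_var_tree r ->
  (forall p j, r p = Some (LVar j) -> j < n) -> @good T n r.
Proof.
move=> Hw Hs Hv; split => // p [f|mu||j] E.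
- by left; exists f.
- by case: (Hs p) => _ /(_ mu).
- by case: (Hs p).
- by right; exists j; split => //; exact: Hv E.
Qed.

Lemma lhs_good (mu : rs T) : @good T (rs_ar mu) (lhs mu).
Proof. by have [? [? [? [? [? [? [? [? ?]]]]]]]] := HT mu; apply: lab_good. Qed.
Lemma rhs_good (mu : rs T) : @good T (rs_ar mu) (rhs mu).
Proof. by have [? [? [? [? [? [? [? [? ?]]]]]]]] := HT mu; apply: lab_good. Qed.
Lemma lhs_root (mu : rs T) : exists f, lhs mu [::] = Some (LF f).
Proof. by have [? [? [? [? [? [? [? [? ?]]]]]]]] := HT mu. Qed.
Lemma lhs_sv (mu : rs T) : sigma_var_tree (lhs mu).
Proof. by have [? [? [? [? [? [? [? [? ?]]]]]]]] := HT mu. Qed.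
Lemma rhs_sv (mu : rs T) : sigma_var_tree (rhs mu).
Proof. by have [? [? [? [? [? [? [? [? ?]]]]]]]] := HT mu. Qed.
Lemma lhs_lin (mu : rs T) j q q' : lhs mu q = Some (LVar j) -> lhs mu q' = Some (LVar j) -> q = q'.
Proof.
have [_ [_ [_ [_ [_ [_ [Hex [Hlt _]]]]]]]] := HT mu => Hq Hq'.
have [p [Hp Hu]] := Hex j (Hlt _ _ Hq).
by rewrite (Hu _ Hq) (Hu _ Hq').
Qed.
Lemma lhs_ex (mu : rs T) j : j < rs_ar mu -> exists q, lhs mu q = Some (LVar j).
Proof.
have [_ [_ [_ [_ [_ [_ [Hex _]]]]]]] := HT mu => Hj.
by have [p [Hp _]] := Hex j Hj; exists p.
Qed.
Lemma lhs_var_pos (mu : rs T) q j : lhs mu q = Some (LVar j) -> j < rs_ar mu /\ 0 < size q.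
Proof.
move=> Hq; split; first by case: (lhs_good mu) => _ /(_ _ _ Hq) [[f //]|[j' [[->] ?]]].
case: q Hq => // Hq; have [f Hf] := lhs_root mu; by rewrite Hf in Hq.
Qed.
Lemma lhs_nonvar (mu : rs T) j : lhs mu [::] <> Some (LVar j).
Proof. by have [f ->] := lhs_root mu. Qed.

Fixpoint srcl (d : nat) (t : tr) : tr :=
  match d with
  | 0 => t
  | d'.+1 => match t [::] with
             | Some (LF f) => node (LF f) (fun i => srcl d' (child t i))
             | Some (LR mu) => subst (lhs mu) (fun j => srcl d' (child t j))
             | _ => t end end.

Definition src (t : tr) : tr := fun p => srcl (size p).+1 t p.

Lemma subst_ext_le (t : tr) s s' p : (forall j q, size q <= size p -> s j q = s' j q) ->
  subst t s p = subst t s' p.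
Proof.
elim: p t => [|k p IH] t H.
  rewrite !subst_nil; case: (t [::]) => [[f|mu||j]|] //; exact: H.
case: (var_dec t) => [[j E]|Hnv]; first by rewrite !(subst_var _ E); apply: H.
rewrite !subst_nonvar_cons //; apply: IH => j q Hq; apply: H => /=; lia.
Qed.

Lemma subst_ext_strict (t : tr) s s' p : (forall j, t [::] <> Some (LVar j)) ->
  (forall j q, size q < size p -> s j q = s' j q) -> subst t s p = subst t s' p.
Proof.
case: p => [|k p] Hnv H.
  by rewrite !subst_nil; case E: (t [::]) => [[f|mu||j]|] //; case: (Hnv j).
rewrite !subst_nonvar_cons //; apply: subst_ext_le => j q Hq; apply: H => /=; lia.
Qed.

Lemma srcl_stab n p t d d' : size p <= n -> size p < d -> size p < d' ->
  srcl d t p = srcl d' t p.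
Proof.
elim: n p t d d' => [|n IH] p t [|d] [|d'] Hn Hd Hd' //=.
  case: (t [::]) => [[f|mu||j]|] //.
    by case: p Hn {Hd Hd'}.
  by apply: subst_ext_strict => [j|j q Hq]; [exact: lhs_nonvar | lia].
case: (t [::]) => [[f|mu||j]|] //.
  case: p Hn Hd Hd' => [|i p] //= Hn Hd Hd'; case: ifP => // _; apply: IH; lia.
apply: subst_ext_strict => [j|j q Hq]; first exact: lhs_nonvar.
apply: IH; lia.
Qed.

Lemma src_F (t : tr) f : t [::] = Some (LF f) -> src t = node (LF f) (fun i => src (child t i)).
Proof. by move=> E; apply: functional_extensionality => [[|i q]]; rewrite /src /= E. Qed.

Lemma src_R (t : tr) mu : t [::] = Some (LR mu) ->
  src t = subst (lhs mu) (fun j => src (child t j)).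
Proof.
move=> E; apply: functional_extensionality => p; rewrite /src [srcl _ t]/= E.
apply: subst_ext_strict => [j|j q Hq]; first exact: lhs_nonvar.
apply: (@srcl_stab (size q)); lia.
Qed.

Lemma srcl_lim (t : tr) : tlim (fun d => srcl d t) (src t).
Proof.
move=> D; exists D.+1 => k Hk q Hq; rewrite /src; apply: (@srcl_stab (size q)); lia.
Qed.

Lemma ms_root (t : tr) : multistep t ->
  (exists f, t [::] = Some (LF f)) \/ (exists mu, t [::] = Some (LR mu)).
Proof.
move=> [[Hw _] Hl]; case E: (t [::]) => [[f|mu||j]|] //; try (by left; exists f); try (by right; exists mu).
- by case: (Hl [::]); rewrite E.
- by case: (Hl [::]) => _ /(_ j); rewrite E.
Qed.

Lemma ms_child (t : tr) a i : multistep t -> t [::] = Some a -> i < arity a -> multistep (child t i).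
Proof.
move=> [Hw Hl] E Hi; split; first exact: wf_child Hw E Hi.
by move=> p; exact: Hl (i :: p).
Qed.

Lemma srcl_macro d (t : tr) : multistep t -> ared (@lhs T) d (srcl d t) (srcl d.+1 t).
Proof.
elim: d t => [|d IH] t Ht.
  case: (ms_root Ht) => [[f E]|[mu E]] /=; rewrite E.
    rewrite -(@node_ext _ _ (child t)) // -(node_child Ht.1 E); exact: ar_refl.
  apply: (ared_one (p := [::])) => //; exists mu; split => //.
  by rewrite repl_nil.
case: (ms_root Ht) => [[f E]|[mu E]].
  rewrite [srcl d.+1 t]/= [srcl d.+2 t]/= E.
  apply: ared_node_all => i Hi; apply: IH; exact: ms_child Ht E Hi.
rewrite [srcl d.+1 t]/= [srcl d.+2 t]/= E.
apply: (ared_subst_all (n := rs_ar mu)); first exact: (lhs_good mu).1.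
- move=> q j; exact: lhs_var_pos.
- move=> j q q'; exact: lhs_lin.
- move=> j; exact: lhs_ex.
- move=> j Hj; apply: IH; exact: ms_child Ht E Hj.
Qed.

Lemma src_LRed (t : tr) : multistep t -> LRed (@lhs T) t (src t).
Proof.
move=> Ht; exists (fun d => srcl d t), (fun d => d); split => //.
- move=> d; exact: srcl_macro.
- by move=> D; exists D.
- exact: srcl_lim.
Qed.

End Src.

Set Implicit Arguments.
Unset Strict Implicit.
Unset Printing Implicit Defensive.

Section Src2.
Variable T : trs.
Notation tr := (tree (fs T) (rs T)).
Notation lb := (lab (fs T) (rs T)).
Hypothesis HT : left_linear_trs T.

Lemma src_labels n (t : tr) p a : size p = n -> multistep t -> src t p = Some a -> exists f, a = LF f.
Proof.
elim/ltn_ind: n t p a => n IH t p a Hn Ht.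
case: (ms_root Ht) => [[f E]|[mu E]].
  rewrite (src_F E); case: p Hn => [|i q] Hn /=; first by case=> <-; exists f.
  case: ifP => // Hi; apply: (IH (size q)) => //; [by rewrite -Hn | exact: ms_child Ht E Hi].
rewrite (src_R HT E) => /subst_inv [[H1 H2]|[q [q' [j [Hp Hq Hs]]]]].
  by case: (lhs_good HT mu) => _ /(_ _ _ H1) [//|[j [Hj _]]]; case: (H2 j).
have [Hj Hsz] := lhs_var_pos HT Hq.
apply: (IH (size q')) Hs => //; first by rewrite -Hn Hp size_cat; lia.
exact: ms_child Ht E Hj.
Qed.

Lemma src_nil (t : tr) : multistep t -> src t [::] <> None.
Proof.
move=> Ht; case: (ms_root Ht) => [[f E]|[mu E]]; first by rewrite (src_F E).
rewrite (src_R HT E) subst_nil; have [f ->] := lhs_root HT mu; by [].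
Qed.

Lemma wfat_node (a : lb) (g : nat -> tr) p :
  (forall i, i < arity a -> g i [::] <> None) ->
  (forall k p', p = k :: p' -> k < arity a -> wfat (g k) p') -> wfat (node a g) p.
Proof.
move=> H1 H2; case: p H2 => [|k p] H2 i /=.
  case: ifP => Hi; last by split => [[b Hb] | [b [[<-] Hb']]] //; rewrite Hi in Hb'.
  split => _; first by exists a.
  by case E: (g i [::]) (H1 i Hi) => [b|] // _; exists b.
case: ifP => Hk; first exact: H2.
by split => -[b Hb] //; case: Hb.
Qed.

Lemma src_wfat n (t : tr) p : size p = n -> multistep t -> wfat (src t) p.
Proof.
elim/ltn_ind: n t p => n IH t p Hn Ht.
case: (ms_root Ht) => [[f E]|[mu E]].
  rewrite (src_F E); apply: wfat_node => [i Hi|k p' Hp Hk].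
    apply: src_nil; exact: ms_child Ht E Hi.
  apply: (IH (size p')); [by rewrite -Hn Hp | by [] | exact: ms_child Ht E Hk].
rewrite (src_R HT E); apply: wfat_subst => [|q q' j Hp Hq|i j Hq].
- exact: (lhs_good HT mu).1.
- have [Hj Hsz] := lhs_var_pos HT Hq.
  have Hc := ms_child Ht E Hj; split; first exact: src_nil.
  apply: (IH (size q')) => //; rewrite -Hn Hp size_cat; lia.
- have [Hj Hsz] := lhs_var_pos HT Hq; apply: src_nil; exact: ms_child Ht E Hj.
Qed.

Lemma src_ms (t : tr) : multistep t -> multistep (src t).
Proof.
move=> Ht; split; first split.
- exact: src_nil.
- move=> p; exact: (src_wfat erefl Ht).
- move=> p; split => [H|i H]; by have [f] := src_labels erefl Ht H.
Qed.

Lemma src_rf (t : tr) : multistep t -> rule_free (src t).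
Proof. move=> Ht p mu H; by have [f] := src_labels erefl Ht H. Qed.

Lemma is_src_src (t : tr) : multistep t -> is_src t (src t).
Proof. move=> Ht; split; [apply: LRed_sc; exact: src_LRed | exact: src_rf]. Qed.

Lemma child_node (a : lb) (g : nat -> tr) i : i < arity a -> child (node a g) i = g i.
Proof. by move=> Hi; apply: functional_extensionality => q; rewrite /child /= Hi. Qed.

Lemma src_subst n (r : tr) (a : nat -> tr) : good n r ->
  src (subst r a) = subst r (fun j => src (a j)).
Proof.
move=> Hg; apply: functional_extensionality => p.
elim: p r Hg => [|i p IH] r Hg.
  case: (good_root Hg) => [[f Hf]|[j [Hj _]]]; last by rewrite !(subst_var _ Hj).
  by rewrite (subst_F _ Hg.1 Hf) (src_F (f := f)) ?(subst_F _ Hg.1 Hf).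
case: (good_root Hg) => [[f Hf]|[j [Hj _]]]; last by rewrite !(subst_var _ Hj).
rewrite (subst_F _ Hg.1 Hf) (src_F (f := f)) // (subst_F _ Hg.1 Hf) /=.
case: ifP => // Hi; rewrite child_node //; apply: IH; exact: good_child Hg Hf Hi.
Qed.

Lemma ms_subst n (r : tr) (a : nat -> tr) : good n r -> (forall j, j < n -> multistep (a j)) ->
  multistep (subst r a).
Proof.
move=> [Hw Hl] Ha; split.
  apply: wf_subst Hw _ => q j Hq; case: (Hl _ _ Hq) => [[f //]|[j' [[<-] Hj]]]; exact: (Ha j Hj).1.
move=> p; split => [H|i H]; case/subst_inv: H => [[H1 H2]|[q [q' [j [_ Hq Hs]]]]].
- by case: (Hl _ _ H1) => [[f //]|[j [Hj _]]].
- case: (Hl _ _ Hq) => [[f //]|[j' [[<-] Hj]]]; by case: ((Ha j Hj).2 q').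
- by case: (H2 i).
- case: (Hl _ _ Hq) => [[f //]|[j' [[<-] Hj]]]; case: ((Ha j Hj).2 q') => _ /(_ i); by [].
Qed.

Lemma rf_subst n (r : tr) (b : nat -> tr) : good n r -> (forall j, j < n -> rule_free (b j)) ->
  rule_free (subst r b).
Proof.
move=> [Hw Hl] Hb p mu; case/subst_inv => [[H1 _]|[q [q' [j [_ Hq Hs]]]]].
  by case: (Hl _ _ H1) => [[f //]|[j [Hj _]]].
case: (Hl _ _ Hq) => [[f //]|[j' [[<-] Hj]]]; exact: (Hb j Hj) Hs.
Qed.

Lemma ms_nodeR (mu : rs T) (s : nat -> tr) : (forall j, j < rs_ar mu -> multistep (s j)) ->
  multistep (node (LR mu) s).
Proof.
move=> H; split; first by apply: wf_node => i Hi; exact: (H i Hi).1.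
move=> [|i q] /=; first by [].
case: ifP => // Hi; exact: (H i Hi).2.
Qed.

End Src2.

Set Implicit Arguments.
Unset Strict Implicit.
Unset Printing Implicit Defensive.

Lemma lnp (P : nat -> Prop) : (exists k, ~ P k) -> exists k, ~ P k /\ forall m, m < k -> P m.
Proof.
move=> [k Hk]; elim/ltn_ind: k Hk => k IH Hk.
case: (classic (exists m, m < k /\ ~ P m)) => [[m [Hm Hpm]]|Hno]; first exact: IH m Hm Hpm.
exists k; split => // m Hm; apply: NNPP => Hp; apply: Hno; by exists m.
Qed.

Section Gen.
Variable T : trs.
Notation tr := (tree (fs T) (rs T)).
Variable rr : rs T -> tr.

Lemma step_child (s : tr) i p X mu : s (i :: p) = Some (LR mu) ->
  X = subst (rr mu) (fun j => subtree s (rcons (i :: p) j)) ->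
  step_at rr (child s i) p (repl (child s i) p X).
Proof. by move=> H ->; exists mu. Qed.

Lemma ared_child d (s t : tr) i : ared rr d s t -> 0 < d -> ared rr d.-1 (child s i) (child t i).
Proof.
elim=> [s0|s0 p s1 t0 Hp [mu [Hmu Hs1]] _ IH] Hd; first exact: ar_refl.
case: p Hp Hmu Hs1 => [|k p] Hp Hmu Hs1; first by move: Hp; rewrite leqNgt Hd.
have Hc := child_repl s0 k p (subst (rr mu) (fun i0 => subtree s0 (rcons (k :: p) i0))) i.
rewrite -Hs1 in Hc.
case: (eqVneq k i) Hc => [Hki|Hki] Hc.
  subst k; apply: (ar_step (p := p) (s1 := child s1 i)).
  - by move: Hp => /=; lia.
  - by rewrite Hc; apply: step_child Hmu _.
  - exact: IH.
by rewrite Hc in IH; exact: IH.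
Qed.

Lemma ared_rootF d (s t : tr) f : ared rr d s t -> s [::] = Some (LF f) ->
  ared rr (maxn d 1) s t /\ t [::] = Some (LF f).
Proof.
elim=> [s0|s0 p s1 t0 Hp Hs _ IH] Hf; first by split => //; exact: ar_refl.
case: p Hp Hs => [|k p] Hp Hs; first by case: Hs => mu [H _]; rewrite H in Hf.
have Hf1 : s1 [::] = Some (LF f) by rewrite (step_keep Hs).
have [IH1 IH2] := IH Hf1; split => //.
apply: ar_step _ Hs IH1; rewrite geq_max Hp /=; lia.
Qed.

Lemma LRed_shift (u : nat -> tr) dd t k :
  (forall k, ared rr (dd k) (u k) (u k.+1)) ->
  (forall D, exists N, forall k, N <= k -> D <= dd k) -> tlim u t -> LRed rr (u k) t.
Proof.
move=> Hs Hd Hl; exists (fun i => u (k + i)), (fun i => dd (k + i)); split.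
- by rewrite addn0.
- by move=> i; rewrite addnS; exact: Hs.
- move=> D; have [N HN] := Hd D; exists N => i Hi; apply: HN; lia.
- move=> D; have [N HN] := Hl D; exists N => i Hi; apply: HN; lia.
Qed.

Lemma LRed_child (s t : tr) f i : s [::] = Some (LF f) -> LRed rr s t ->
  LRed rr (child s i) (child t i).
Proof.
move=> Hf [u [dd [H0 Hs Hd Hl]]].
have Hroot : forall k, u k [::] = Some (LF f).
  elim=> [|k IH]; first by rewrite H0.
  exact: (ared_rootF (Hs k) IH).2.
exists (fun k => child (u k) i), (fun k => (maxn (dd k) 1).-1); split.
- by rewrite H0.
- move=> k; apply: ared_child; first exact: (ared_rootF (Hs k) (Hroot k)).1.
  by rewrite leq_max orbT.
- move=> D; have [N HN] := Hd D.+1; exists N => k Hk; have := HN k Hk; lia.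
- move=> D; have [N HN] := Hl D.+1; exists N => k Hk q Hq; rewrite /child; apply: HN => //.
Qed.

Lemma LRed_subst_proj n (r : tr) q j (a : nat -> tr) t : good n r -> r q = Some (LVar j) ->
  LRed rr (subst r a) t -> LRed rr (a j) (subtree t q).
Proof.
elim: q r t => [|k q IH] r t Hg Hq.
  rewrite (subst_var _ Hq); have -> : subtree t [::] = t by apply: functional_extensionality.
  by [].
move=> H.
have [b [Hb Hk]] := @wf_child_lt _ r k q Hg.1 (ltac:(by rewrite Hq)).
case: (good_root Hg) => [[f Hf]|[j' [Hj' _]]]; last by rewrite Hj' in Hb; case: Hb => <- in Hk.
rewrite Hf in Hb; case: Hb => Hb; subst b.
have Hc := LRed_child k (ltac:(by rewrite /= Hf) : subst r a [::] = Some (LF f)) H.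
have E : child (subst r a) k = subst (child r k) a.
  by apply: functional_extensionality => p; rewrite /child subst_nonvar_cons // => j0; rewrite Hf.
rewrite E in Hc; exact: (IH (child r k) (child t k) (good_child Hg Hf Hk) Hq Hc).
Qed.

Lemma ared_split d (x y : tr) : ared rr d x y -> ~ ared rr 1 x y ->
  exists w w', [/\ ared rr 1 x w, step_at rr w [::] w' & ared rr d w' y].
Proof.
elim=> [s0|s0 p s1 t0 Hp Hs Ha IH] Hn; first by case: Hn; exact: ar_refl.
case: p Hp Hs => [|k p] Hp Hs.
  by exists s0, s1; split => //; exact: ar_refl.
have Hn1 : ~ ared rr 1 s1 t0 by move=> H; apply: Hn; exact: ar_step _ Hs H.
have [w [w' [H1 H2 H3]]] := IH Hn1.
by exists w, w'; split => //; exact: ar_step _ Hs H1.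
Qed.

Lemma ared1_root (x y : tr) : ared rr 1 x y -> y [::] = x [::].
Proof. by move=> H; apply: ared_keep H _. Qed.

Lemma root_step (s t : tr) mu : s [::] = Some (LR mu) -> LRed rr s t -> rule_free t ->
  exists w, [/\ ared rr 1 s w, w [::] = Some (LR mu) & LRed rr (subst (rr mu) (child w)) t].
Proof.
move=> Hs [u [dd [H0 Hst Hd Hl]]] Hrf.
case: (classic (exists k, ~ ared rr 1 (u k) (u k.+1))) => [Hex|Hall]; last first.
  have Hr : forall k, u k [::] = Some (LR mu).
    elim=> [|k IH]; first by rewrite H0.
    rewrite (ared1_root (y := u k.+1) (x := u k)) //.
    by apply: NNPP => H; apply: Hall; exists k.
  have [N HN] := Hl 0; have := HN N (leqnn _) [::] (leqnn _); rewrite Hr => E.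
  by case: (Hrf [::] mu).
have [k [Hk Hlt]] := lnp Hex.
have Hpre : forall m, m <= k -> ared rr 1 (u 0) (u m).
  elim=> [|m IH] Hm; first exact: ar_refl.
  exact: ared_trans (IH (ltnW Hm)) (Hlt m Hm).
have [w [w' [H1 H2 H3]]] := ared_split (Hst k) Hk.
have Hw : ared rr 1 s w by rewrite -H0; exact: ared_trans (Hpre k (leqnn _)) H1.
have Hwr : w [::] = Some (LR mu) by rewrite (ared1_root Hw).
exists w; split => //.
case: H2 => nu [Hnu Hw']; rewrite Hwr in Hnu; case: Hnu => Hnu; subst nu.
rewrite repl_nil in Hw'.
have -> : subst (rr mu) (child w) = w' by rewrite Hw'.
exact: LRed_cons H3 (LRed_shift k.+1 Hst Hd Hl).
Qed.

End Gen.

Section Conv.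
Variable T : trs.
Notation tr := (tree (fs T) (rs T)).
Hypothesis HT : left_linear_trs T.

CoInductive ICC (s : tr) : Prop :=
  icc mu i : s [::] = Some (LR mu) -> rhs mu [::] = Some (LVar i) -> ICC (child s i) -> ICC s.

Lemma ICC_step (s s' : tr) p : step_at (@rhs T) s p s' -> ICC s -> ICC s'.
Proof.
elim: p s s' => [|k p IH] s s' [nu [Hnu ->]] [mu i Hs Hr Hc].
  rewrite Hs in Hnu; case: Hnu => Hnu; subst nu.
  rewrite repl_nil.
  have -> : (fun i0 => subtree s (rcons [::] i0)) = child s by [].
  by rewrite (subst_var _ Hr).
apply: (icc (mu := mu) (i := i)) => //.
rewrite child_repl; case: (eqVneq k i) => [Hki|//]; subst k.
apply: IH Hc; exact: step_child Hnu erefl.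
Qed.

Lemma ICC_ared d (s t : tr) : ared (@rhs T) d s t -> ICC s -> ICC t.
Proof. elim=> // s0 p s1 t0 _ Hs _ IH H; apply: IH; exact: ICC_step Hs H. Qed.

Lemma ICC_LRed (s t : tr) : LRed (@rhs T) s t -> rule_free t -> ICC s -> False.
Proof.
move=> [u [dd [H0 Hst Hd Hl]]] Hrf Hs.
have Hu : forall k, ICC (u k).
  elim=> [|k IH]; [by rewrite H0 | exact: ICC_ared (Hst k) IH].
have [N HN] := Hl 0; have := HN N (leqnn _) [::] (leqnn _).
case: (Hu N) => mu i Hr _ _; rewrite Hr => E; by case: (Hrf [::] mu).
Qed.

Inductive FC (s : tr) : Prop :=
| fc_base : (forall mu i, s [::] = Some (LR mu) -> rhs mu [::] = Some (LVar i) -> False) -> FC s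
| fc_step mu i : s [::] = Some (LR mu) -> rhs mu [::] = Some (LVar i) -> FC (child s i) -> FC s.

Lemma notFC_ICC : forall s : tr, ~ FC s -> ICC s.
Proof.
cofix CIH => s Hn.
case: (classic (exists mu i, s [::] = Some (LR mu) /\ rhs mu [::] = Some (LVar i))) => [[mu [i [H1 H2]]]|Hno].
  apply: (icc H1 H2); apply: CIH => Hc; apply: Hn; exact: fc_step H1 H2 Hc.
exfalso; apply: Hn; apply: fc_base => mu i H1 H2; apply: Hno; by exists mu, i.
Qed.

Lemma conv_FC (s t : tr) : LRed (@rhs T) s t -> rule_free t -> FC s.
Proof. move=> H Hr; apply: NNPP => Hn; exact: ICC_LRed H Hr (notFC_ICC Hn). Qed.

End Conv.



Set Implicit Arguments.
Unset Strict Implicit.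
Unset Printing Implicit Defensive.

Section Main.
Variable T : trs.
Notation tr := (tree (fs T) (rs T)).
Hypothesis HT : left_linear_trs T.

Lemma conv_collapse (psi t : tr) mu i : psi [::] = Some (LR mu) -> rhs mu [::] = Some (LVar i) ->
  LRed (@rhs T) psi t -> rule_free t -> LRed (@rhs T) (child psi i) t.
Proof.
move=> Hs Hr H Hrf; have [w [H1 H2 H3]] := root_step Hs H Hrf.
rewrite (subst_var _ Hr) in H3.
exact: LRed_cons (ared_child i H1 (ltn0Sn 0)) H3.
Qed.

Lemma conv_subst (psi t : tr) mu : psi [::] = Some (LR mu) ->
  LRed (@rhs T) psi t -> rule_free t -> convergent_ms (subst (rhs mu) (child psi)).
Proof.
move=> Hs H Hrf; have [w [H1 H2 H3]] := root_step Hs H Hrf.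
have Hg := rhs_good HT mu.
have [b Hb] : exists b : nat -> tr, forall j, LRed (@rhs T) (child psi j) (b j) /\
    ((exists q, rhs mu q = Some (LVar j)) -> rule_free (b j)).
  apply: (@choice' nat tr (fun j b => LRed (@rhs T) (child psi j) b /\
    ((exists q, rhs mu q = Some (LVar j)) -> rule_free b))) => j.
  case: (classic (exists q, rhs mu q = Some (LVar j))) => [[q Hq]|Hno].
    exists (subtree t q); split; last by move=> _ p nu; exact: Hrf.
    exact: LRed_cons (ared_child j H1 (ltn0Sn 0)) (LRed_subst_proj Hg Hq H3).
  exists (child psi j); split; [exact: LRed_refl | move=> Hc; by case: Hno].
exists (subst (rhs mu) b); split.
  apply: LRed_sc; apply: LRed_subst Hg _ => j; exact: (Hb j).1.
move=> p nu; case/subst_inv => [[H4 _]|[q [q' [j [_ Hq H5]]]]].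
  by case: (rhs_sv HT mu p) => _ /(_ nu).
by apply: ((Hb j).2 (ex_intro _ q Hq)) H5.
Qed.

Lemma PT_src (t : tr) : multistep t -> PT t (src t) (is_tgt t).
Proof. move=> Ht; apply: PT_ms Ht (is_src_src HT Ht). Qed.

Lemma rf_sc (x : tr) : rule_free x -> sc_red (@rhs T) x x /\ sc_red (@lhs T) x x.
Proof. by move=> _; split; left; exists 0, (fun _ => x). Qed.

Lemma PT_rf (x : tr) : multistep x -> rule_free x -> PT x x (is_tgt x) /\ is_tgt x x.
Proof.
move=> Hm Hr; have [H1 H2] := rf_sc Hr; split; last by split.
by apply: PT_ms Hm _; split.
Qed.

Lemma mkDot_inj (a b a' b' : tr) : mkDot a b = mkDot a' b' -> a = a' /\ b = b'.
Proof.
move=> E; split; apply: functional_extensionality => q.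
  by have := congr1 (fun f => f (0 :: q)) E.
by have := congr1 (fun f => f (1 :: q)) E.
Qed.

Lemma comp_nondot (t c : tr) i : component t i c -> t [::] <> Some LDot -> c = t.
Proof. by case => // a b n i' c' _ _ _ H; case: H. Qed.

Lemma comp_dot_inv (a b c : tr) i : component (mkDot a b) i c ->
  (exists n, [/\ fsw a n, i < n & component a i c]) \/
  (exists n, [/\ fsw a n, n <= i & component b (i - n) c]).
Proof.
move E: (mkDot a b) => t H; case: H E.
- move=> t0 [[_ Hl] _] E; subst t0; by case: (Hl [::]).
- move=> a' b' n i' c' Hf Hi Hc /mkDot_inj [Ha Hb]; subst a' b'; left; by exists n.
- move=> a' b' n i' c' Hf Hi Hc /mkDot_inj [Ha Hb]; subst a' b'; right; by exists n.
Qed.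

Lemma fsw_nodeR (mu : rs T) (s : nat -> tr) n : fsw (node (LR mu) s) n -> n = 1.
Proof.
move E: (node (LR mu) s) => t H; case: H E => //.
- move=> t0 _ Hr E; subst t0; by case: (Hr [::] mu).
- move=> a b n0 m _ _ E; by have := congr1 (fun f => f [::]) E.
Qed.

Lemma one_step_nodeR (mu : rs T) (s : nat -> tr) :
  (forall j, j < rs_ar mu -> multistep (s j) /\ rule_free (s j)) ->
  one_step (node (LR mu) s) /\ os_depth (node (LR mu) s) 0.
Proof.
move=> H.
have Hone : one_step (node (LR mu) s).
  split; first by apply: ms_nodeR => j Hj; case: (H j Hj).
  exists [::], mu; split => // [[|i q]] nu //=.
  by case: ifP => // Hi; case: (H i Hi) => _ /(_ q nu).
by split => //; split => //; exists [::], mu.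
Qed.

End Main.

Set Implicit Arguments.
Unset Strict Implicit.
Unset Printing Implicit Defensive.

Section Main2.
Variable T : trs.
Notation tr := (tree (fs T) (rs T)).
Hypothesis HT : left_linear_trs T.

Definition goodres (psi chi phi : tr) :=
  [/\ peq psi (mkDot chi phi),
      (exists T1 s2 T2, [/\ PT chi (src psi) T1, PT phi s2 T2 & T1 s2]),
      (exists n, fsw chi n /\ forall i c, i < n -> component chi i c -> os_depth c 0),
      multistep phi /\ convergent_ms phi & mind_ge phi 1].

Lemma conv_LRed (psi : tr) : convergent_ms psi -> exists t, LRed (@rhs T) psi t /\ rule_free t.
Proof. by move=> [t [H1 H2]]; exists t; split => //; apply: sc_LRed. Qed.

Lemma main_aux (psi : tr) : FC psi -> multistep psi -> convergent_ms psi ->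
  exists chi phi, goodres psi chi phi.
Proof.
elim=> {psi} [psi Hb|psi mu i Hs Hr Hfc IH] Hm Hc.
  case: (ms_root Hm) => [[f Hf]|[mu Hmu]].
    have [PTs Hts] := PT_rf (src_ms HT Hm) (src_rf HT Hm).
    have PTp := PT_src HT Hm.
    have Hpt : is_pt (mkDot (src psi) psi).
      by exists (src psi), (is_tgt psi); exact: PT_dot PTs PTp Hts.
    exists (src psi), psi; split.
    - exact: pe_sym (pe_src PTp Hpt).
    - by exists (is_tgt (src psi)), (src psi), (is_tgt psi).
    - exists 0; split => //; apply: fsw_nf; [exact: src_ms | exact: src_rf].
    - by [].
    - move=> [|k p] nu //; by rewrite Hf.
  (* root rule, non-collapsing *)
  have [g Hg] : exists g, rhs mu [::] = Some (LF g).
    case: (good_root (rhs_good HT mu)) => [//|[j [Hj _]]].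
    by case: (Hb mu j Hmu Hj).
  pose s := fun j => src (child psi j).
  have Hpsi := node_child Hm.1 Hmu.
  have Hma : forall j, j < rs_ar mu -> multistep (child psi j) by move=> j; exact: ms_child Hm Hmu.
  have PTs : forall j, j < rs_ar mu -> PT (s j) (s j) (is_tgt (s j)) /\ is_tgt (s j) (s j).
    move=> j Hj; rewrite /s; apply: PT_rf; [exact (src_ms HT (Hma j Hj)) | exact (src_rf HT (Hma j Hj))].
  have PTc0 := PT_R (psi := s) (s := s) (Tg := fun j => is_tgt (s j)) (fun j Hj => (PTs j Hj).1).
  have Hmphi : multistep (subst (rhs mu) (child psi)) := ms_subst (rhs_good HT mu) Hma.
  have PTphi := PT_src HT Hmphi.
  have HT0 : (fun t => exists ts, (forall j, j < rs_ar mu -> is_tgt (s j) (ts j)) /\ t = subst (rhs mu) ts)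
               (src (subst (rhs mu) (child psi))).
    exists s; split; first by move=> j Hj; exact: (PTs j Hj).2.
    exact: (src_subst _ (rhs_good HT mu)).
  have Hchi := one_step_nodeR (s := s) (mu := mu)
    (fun j Hj => conj (src_ms HT (Hma j Hj)) (src_rf HT (Hma j Hj))).
  exists (node (LR mu) s), (subst (rhs mu) (child psi)); split.
  - rewrite {1}Hpsi; apply: (pe_R_out (s := s) (Tg := fun j => is_tgt (child psi j))).
    + by move=> j Hj; exact (PT_src HT (Hma j Hj)).
    + by exists (src psi), (is_tgt psi); rewrite -Hpsi; exact (PT_src HT Hm).
    + by eexists; eexists; exact: PT_dot PTc0 PTphi HT0.
  - by eexists; eexists; eexists; split; [rewrite (src_R HT Hmu); exact: PTc0 | exact: PTphi | exact: HT0].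
  - exists 1; split; first exact: fsw_one Hchi.1.
    move=> i c Hi Hcp; rewrite (comp_nondot Hcp) //; exact: Hchi.2.
  - split => //; have [t [Hl Hrf]] := conv_LRed Hc; exact (conv_subst HT Hmu Hl Hrf).
  - by move=> [|k p] nu //; rewrite subst_nil Hg.
(* collapsing root *)
have Hi : i < rs_ar mu.
  by case: (rhs_good HT mu) => _ /(_ _ _ Hr) [[f //]|[j [[<-] Hj]]].
pose s := fun j => src (child psi j).
have Hpsi := node_child Hm.1 Hs.
have Hma : forall j, j < rs_ar mu -> multistep (child psi j) by move=> j; exact: ms_child Hm Hs.
have PTs : forall j, j < rs_ar mu -> PT (s j) (s j) (is_tgt (s j)) /\ is_tgt (s j) (s j).
  move=> j Hj; rewrite /s; apply: PT_rf; [exact (src_ms HT (Hma j Hj)) | exact (src_rf HT (Hma j Hj))].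
have PTc0 := PT_R (psi := s) (s := s) (Tg := fun j => is_tgt (s j)) (fun j Hj => (PTs j Hj).1).
have HT0 : (fun t => exists ts, (forall j, j < rs_ar mu -> is_tgt (s j) (ts j)) /\ t = subst (rhs mu) ts)
             (s i).
  exists s; split; first by move=> j Hj; exact: (PTs j Hj).2.
  by rewrite (subst_var _ Hr).
have Hchi := one_step_nodeR (s := s) (mu := mu)
  (fun j Hj => conj (src_ms HT (Hma j Hj)) (src_rf HT (Hma j Hj))).
have Hci : convergent_ms (child psi i).
  have [t [Hl Hrf]] := conv_LRed Hc; exists t; split => //.
  apply: LRed_sc; exact: conv_collapse Hs Hr Hl Hrf.
have [chi' [phi' [Hpe [T1 [s2 [T2 [PTchi PTphi HT1]]]] [n [Hfsw Hcomp]] Hphi Hmind]]] := IH (Hma i Hi) Hci.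
have PTc0chi := PT_dot PTc0 PTchi HT0.
have PTcp := PT_dot PTchi PTphi HT1.
have PTci := PT_src HT (Hma i Hi).
exists (mkDot (node (LR mu) s) chi'), phi'; split.
- apply: (pe_trans (b := mkDot (node (LR mu) s) (child psi i))).
    have E : child psi i = subst (rhs mu) (child psi) by rewrite (subst_var _ Hr).
    rewrite {1}Hpsi E; apply: (pe_R_out (s := s) (Tg := fun j => is_tgt (child psi j))).
    + by move=> j Hj; exact (PT_src HT (Hma j Hj)).
    + by exists (src psi), (is_tgt psi); rewrite -Hpsi; exact (PT_src HT Hm).
    + by rewrite -E; eexists; eexists; exact: PT_dot PTc0 PTci HT0.
  apply: (pe_trans (b := mkDot (node (LR mu) s) (mkDot chi' phi'))).
    rewrite /mkDot; apply: pe_cong_node.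
    + move=> [|[|j]] // _; first by apply: pe_refl; eexists; eexists; exact: PTc0.
    + by eexists; eexists; exact: PT_dot PTc0 PTci HT0.
    + by eexists; eexists; exact: PT_dot PTc0 PTcp HT0.
  apply: pe_sym; apply: pe_assoc.
    by eexists; eexists; exact: PT_dot PTc0chi PTphi HT1.
  by eexists; eexists; exact: PT_dot PTc0 PTcp HT0.
- exists T1, s2, T2; split => //; rewrite (src_R HT Hs); exact: PTc0chi.
- exists (1 + n); split; first exact: fsw_dot (fsw_one Hchi.1) Hfsw.
  move=> i0 c Hi0 /comp_dot_inv [[n0 [Hf0 Hlt Hc0]]|[n0 [Hf0 Hle Hc0]]].
    rewrite (comp_nondot Hc0) //; exact: Hchi.2.
  have E0 := fsw_nodeR Hf0; subst n0.
  apply: Hcomp Hc0; lia.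
- by [].
- by [].
Qed.

End Main2.

Theorem mainTheorem6 (T : trs) (psi : tree (fs T) (rs T)) :
  left_linear_trs T ->
  multistep psi -> convergent_ms psi ->
  exists chi phi : tree (fs T) (rs T),
    [/\ peq psi (mkDot chi phi),
        is_pt chi,
        (exists n, fsw chi n /\
           forall i c, i < n -> component chi i c -> os_depth c 0),
        multistep phi /\ convergent_ms phi &
        mind_ge phi 1].
Proof.
move=> HT Hm Hc.
have [t [Hl Hrf]] := conv_LRed Hc.
have Hfc := conv_FC Hl Hrf.
have [chi [phi [H1 [T1 [s2 [T2 [P1 P2 P3]]]] H3 H4 H5]]] := main_aux HT Hfc Hm Hc.
exists chi, phi; split => //.
by exists (src psi), T1.
Qed.
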